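(* Let $r \in \mathbb{Q}_{>0}$ be such that $S_r$ is atomic. (1) If $r < 1$, then $R(S_r) = \{1, \infty\}$; in particular $S_r$ is not fully elastic. (2) If $r \in \mathbb{N}$, then $R(S_r) = \{1\}$; in particular $S_r$ is fully elastic. (3) If $r \notin \mathbb{N}$ and $\mathsf{n}(r) = \mathsf{d}(r) + 1$, then $R(S_r) = \mathbb{Q}_{\ge 1}$; in particular $S_r$ is fully elastic.
   Context: For $q \in \mathbb{Q}_{>0}$, $\mathsf{n}(q),\mathsf{d}(q)$ are the positive coprime integers with $q = \mathsf{n}(q)/\mathsf{d}(q)$. $S_r$ is the additive submonoid of $(\mathbb{Q}_{\ge 0},+)$ generated by $\{r^n : n \in \mathbb{N}_0\}$; it is atomic exactly when $r=1$ or $\mathsf{n}(r)>1$. $\mathsf{L}(x)$ denotes the set of lengths of factorizations of $x$ into atoms. The elasticity of $x \ne 0$ is $\rho(x) = \sup \mathsf{L}(x)/\inf \mathsf{L}(x) \in \mathbb{Q}_{\ge 1} \cup \{\infty\}$, $\rho(0)=1$, and $\rho(S_r) = \sup\{\rho(x) : x \ne 0\}$. The set of elasticities is $R(S_r) = \{\rho(x) : x \in S_r\}$. A monoid $M$ is fully elastic if $R(M) = \mathbb{Q} \cap [1, \rho(M)]$ when $\infty \notin R(M)$, and $R(M) \setminus \{\infty\} = \mathbb{Q} \cap [1,\infty)$ when $\infty \in R(M)$. *)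

(* Defs.v *)
From HB Require Import structures.
From mathcomp Require Import all_boot all_order all_algebra.
Set Implicit Arguments. Unset Strict Implicit. Unset Printing Implicit Defensive.
Import Order.TTheory GRing.Theory Num.Theory.
Local Open Scope ring_scope.

(* x lies in S_r = the additive submonoid of Q_{>=0} generated by r^n, n >= 0:
   x is a finite N-linear combination of the powers of r. *)
Definition in_Sr (r x : rat) : Prop :=
  exists c : seq nat, x = \sum_(i < size c) (nth 0%N c i)%:R * r ^+ i.

Definition is_atom (r a : rat) : Prop :=
  in_Sr r a /\ a != 0 /\
  forall u v, in_Sr r u -> in_Sr r v -> a = u + v -> u = 0 \/ v = 0.

(* n \in L(x): x has a factorization into n atoms
   (a factorization = finite multiset of atoms, represented by a list) *)
Definition is_length (r x : rat) (n : nat) : Prop :=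
  exists f : seq rat, (forall a, a \in f -> is_atom r a) /\
    \sum_(a <- f) a = x /\ size f = n.

Definition atomic (r : rat) : Prop :=
  forall x, in_Sr r x -> x != 0 -> exists n, is_length r x n.

(* elasticity values: Some q for q in Q_{>=1}, None for infinity.
   elasticity r x v  <->  rho(x) = v. *)
Definition elasticity (r x : rat) (v : option rat) : Prop :=
  if x == 0 then v = Some 1 else
  match v with
  | None => forall N : nat, exists n, is_length r x n /\ (N < n)%N
  | Some q => exists m M : nat,
      is_length r x m /\ is_length r x M /\
      (forall n, is_length r x n -> (m <= n <= M)%N) /\
      q = M%:R / m%:R
  end.

Definition elast_set (r : rat) (v : option rat) : Prop :=
  exists x, in_Sr r x /\ elasticity r x v.

(* fully elastic: if infinity is in R, R \ {inf} = Q_{>=1};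
   otherwise R = Q \cap [1, rho(S_r)] where rho(S_r) = sup R (possibly
   infinite or irrational); "q <= sup R" is expressed as
   "every rational q' < q is exceeded by some element of R". *)
Definition fully_elastic (r : rat) : Prop :=
  (elast_set r None ->
     forall q : rat, elast_set r (Some q) <-> 1 <= q) /\
  (~ elast_set r None ->
     forall q : rat, elast_set r (Some q) <->
       (1 <= q /\ forall q' : rat, q' < q ->
          exists s, elast_set r (Some s) /\ q' < s)).

(* Main.v *)
Require Import Defs.
From HB Require Import structures.
From mathcomp Require Import all_boot all_order all_algebra.
From mathcomp Require Import zify ring lra.
Import Order.TTheory GRing.Theory Num.Theory.
Local Open Scope ring_scope.
Set Implicit Arguments. Unset Strict Implicit.

Definition vl (r : rat) (N : nat) (c : nat -> nat) : rat :=
  \sum_(i < N) (c i)%:R * r ^+ i.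
Definition lnc (N : nat) (c : nat -> nat) : nat := (\sum_(i < N) c i)%N.
Definition shf (c : nat -> nat) : nat -> nat := fun i => c i.+1.
Definition dl (a j : nat) : nat -> nat := fun i => if i == j then a else 0%N.
Definition zb (N : nat) (c : nat -> nat) := forall i, (N <= i)%N -> c i = 0%N.

Lemma vlS r N c : vl r N.+1 c = (c 0%N)%:R + r * vl r N (shf c).
Proof.
rewrite /vl big_ord_recl expr0 mulr1 mulr_sumr; congr (_ + _).
by apply: eq_bigr => i _; rewrite exprS /shf; ring.
Qed.

Lemma lncS N c : lnc N.+1 c = (c 0%N + lnc N (shf c))%N.
Proof. by rewrite /lnc big_ord_recl. Qed.

Lemma vl0 r c : vl r 0 c = 0.
Proof. by rewrite /vl big_ord0. Qed.
Lemma lnc0 c : lnc 0 c = 0%N.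
Proof. by rewrite /lnc big_ord0. Qed.

Lemma vlSr r N c : vl r N.+1 c = vl r N c + (c N)%:R * r ^+ N.
Proof. by rewrite /vl big_ord_recr. Qed.
Lemma lncSr N c : lnc N.+1 c = (lnc N c + c N)%N.
Proof. by rewrite /lnc big_ord_recr. Qed.

Lemma vl_ext r N c c' : (forall i, (i < N)%N -> c i = c' i) -> vl r N c = vl r N c'.
Proof. by move=> h; apply: eq_bigr => i _; rewrite h. Qed.
Lemma lnc_ext N c c' : (forall i, (i < N)%N -> c i = c' i) -> lnc N c = lnc N c'.
Proof. by move=> h; apply: eq_bigr => i _; rewrite h. Qed.

Lemma vl_widen r N M c : zb N c -> (N <= M)%N -> vl r M c = vl r N c.
Proof.
move=> z; elim: M => [|M IH]; first by rewrite leqn0 => /eqP ->.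
rewrite leq_eqVlt => /orP [/eqP -> //|]; rewrite ltnS => h.
by rewrite vlSr IH // z // mul0r addr0.
Qed.
Lemma lnc_widen N M c : zb N c -> (N <= M)%N -> lnc M c = lnc N c.
Proof.
move=> z; elim: M => [|M IH]; first by rewrite leqn0 => /eqP ->.
rewrite leq_eqVlt => /orP [/eqP -> //|]; rewrite ltnS => h.
by rewrite lncSr IH // z // addn0.
Qed.

Lemma vl_add r N c e : vl r N (fun i => c i + e i)%N = vl r N c + vl r N e.
Proof. by rewrite /vl -big_split; apply: eq_bigr => i _; rewrite natrD mulrDl. Qed.
Lemma lnc_add N c e : lnc N (fun i => c i + e i)%N = (lnc N c + lnc N e)%N.
Proof. by rewrite /lnc big_split. Qed.

Lemma vl_zero r N c : (forall i, (i < N)%N -> c i = 0%N) -> vl r N c = 0.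
Proof. by move=> h; rewrite /vl big1 // => i _; rewrite h // mul0r. Qed.
Lemma lnc_zero N c : (forall i, (i < N)%N -> c i = 0%N) -> lnc N c = 0%N.
Proof. by move=> h; rewrite /lnc big1 // => i _; rewrite h. Qed.

Lemma zb_dl a j : zb j.+1 (dl a j).
Proof. by move=> i hi; rewrite /dl; case: eqP => // e; rewrite e ltnn in hi. Qed.

Lemma vl_dl r N a j : (j < N)%N -> vl r N (dl a j) = a%:R * r ^+ j.
Proof.
move=> h; rewrite (vl_widen _ (@zb_dl a j) h) vlSr vl_zero ?add0r /dl ?eqxx //.
by move=> i hi; case: eqP => // e; rewrite e ltnn in hi.
Qed.
Lemma lnc_dl N a j : (j < N)%N -> lnc N (dl a j) = a.
Proof.
move=> h; rewrite (lnc_widen (@zb_dl a j) h) lncSr lnc_zero ?add0n /dl ?eqxx //.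
by move=> i hi; case: eqP => // e; rewrite e ltnn in hi.
Qed.

Lemma rd n d : (0 < d)%N -> n%:R / d%:R * d%:R = n%:R :> rat.
Proof. by move=> h; rewrite mulfVK // pnatr_eq0 -lt0n. Qed.

Lemma key n d i : (0 < d)%N ->
  n%:R * (n%:R / d%:R) ^+ i = d%:R * (n%:R / d%:R) ^+ i.+1 :> rat.
Proof. by move=> h; rewrite exprS mulrA (mulrC (d%:R)) rd. Qed.

Lemma IntL n d N c : (0 < d)%N ->
  exists w : nat, vl (n%:R / d%:R) N c * d%:R ^+ N = w%:R.
Proof.
move=> hd; elim: N c => [|N IH] c; first by exists 0%N; rewrite vl0 mul0r.
have [w hw] := IH (shf c).
exists (c 0%N * d ^ N.+1 + n * w)%N.
rewrite vlS natrD !natrM natrX -hw mulrDl exprS; congr (_ + _).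
set R := vl _ _ _; rewrite -[in RHS](rd n hd); ring.
Qed.

Lemma DivK n d N c e k : (0 < d)%N -> coprime n d ->
  k%:R + n%:R / d%:R * vl (n%:R / d%:R) N c = n%:R / d%:R * vl (n%:R / d%:R) N e ->
  (n %| k)%N.
Proof.
move=> hd co h.
have [w hw] := IntL n N c hd; have [w' hw'] := IntL n N e hd.
have : (k * d ^ N.+1 + n * w)%:R = (n * w')%:R :> rat.
  set R := n%:R / d%:R in h hw hw' *.
  have hn : (n%:R:rat) = R * d%:R by rewrite /R rd.
  rewrite natrD !natrM natrX -hw -hw' hn exprS.
  have E := congr1 (fun x => x * (d%:R * d%:R ^+ N)) h; simpl in E.
  rewrite mulrDl in E.
  transitivity (k%:R * (d%:R * d%:R ^+ N) + R * vl R N c * (d%:R * d%:R ^+ N)); first by ring.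
  rewrite E; ring.
move/eqP; rewrite eqr_nat => /eqP E.
have : (n %| k * d ^ N.+1 + n * w)%N by rewrite E dvdn_mulr.
rewrite dvdn_addl; last by apply: dvdn_mulr.
by rewrite Gauss_dvdl // coprimeXr.
Qed.

Lemma StepMin n d N c e (c0 e0 : nat) : (0 < d)%N -> coprime n d -> (e0 <= c0)%N -> (c0 < n)%N ->
  c0%:R + n%:R / d%:R * vl (n%:R / d%:R) N c = e0%:R + n%:R / d%:R * vl (n%:R / d%:R) N e ->
  c0 = e0.
Proof.
move=> hd co le lt h.
have h2 : (c0 - e0)%:R + n%:R / d%:R * vl (n%:R / d%:R) N c = n%:R / d%:R * vl (n%:R / d%:R) N e.
  rewrite natrB // -addrA addrC -addrA [_ + c0%:R]addrC h; ring.
have := DivK hd co h2.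
case E: (c0 - e0)%N => [|k]; first by move=> _; apply/eqP; rewrite eqn_leq le -subn_eq0 E.
move=> /dvdn_leq; rewrite ltn0Sn => /(_ isT) => hk.
have : (c0 - e0 < n)%N by apply: leq_ltn_trans lt; apply: leq_subr.
by rewrite E ltnNge hk.
Qed.

Lemma Umin n d N c e : (0 < d)%N -> coprime n d ->
  (forall i, (i < N)%N -> (c i < n)%N) -> (forall i, (i < N)%N -> (e i < n)%N) ->
  vl (n%:R / d%:R) N c = vl (n%:R / d%:R) N e -> forall i, (i < N)%N -> c i = e i.
Proof.
move=> hd co; elim: N c e => [//|N IH] c e hc he.
rewrite !vlS => h.
have hn : (0 < n)%N by apply: leq_ltn_trans (hc 0%N isT).
have h0 : c 0%N = e 0%N.
  case: (leqP (e 0%N) (c 0%N)) => le.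
    by apply: (StepMin hd co le (hc 0%N isT) h).
  by symmetry; apply: (StepMin hd co (ltnW le) (he 0%N isT) (esym h)).
rewrite h0 in h; move/addrI: h => h.
have h' : vl (n%:R / d%:R) N (shf c) = vl (n%:R / d%:R) N (shf e).
  apply: (mulfI _ h); rewrite mulf_neq0 // ?invr_eq0 pnatr_eq0 -lt0n //.
move=> [|i] hi //; apply: (IH (shf c) (shf e)) => // j hj; [apply: hc| apply: he]; done.
Qed.

Lemma Rneq0 n d : (0 < n)%N -> (0 < d)%N -> n%:R / d%:R != 0 :> rat.
Proof. by move=> hn hd; rewrite mulf_neq0 // ?invr_eq0 pnatr_eq0 -lt0n. Qed.

Lemma Core n d N : (0 < n)%N -> (0 < d)%N -> coprime n d ->
  forall c e (k : nat), (forall i, (i < N)%N -> (c i < d)%N) -> (forall i, (i < N)%N -> (e i < d)%N) ->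
  k%:R + n%:R / d%:R * vl (n%:R / d%:R) N c = n%:R / d%:R * vl (n%:R / d%:R) N e ->
  k = 0%N /\ forall i, (i < N)%N -> c i = e i.
Proof.
move=> hn hd co; set R := n%:R / d%:R.
have hR : R != 0 by apply: Rneq0.
have hnR : (n%:R : rat) = R * d%:R by rewrite /R rd.
elim: N => [|N IH] c e k hc he h.
  by move: h; rewrite !vl0 mulr0 addr0 => /eqP; rewrite pnatr_eq0 => /eqP.
have /dvdnP [k2 hk2] := DivK hd co h.
have h1 : (d * k2)%:R + vl R N.+1 c = vl R N.+1 e.
  apply: (mulfI hR); rewrite -h hk2 mulrDr !natrM hnR; ring.
move: h1; rewrite !vlS => h1.
case: (leqP (e 0%N) (c 0%N + d * k2)) => le.
  have h2 : (c 0%N + d * k2 - e 0%N)%:R + R * vl R N (shf c) = R * vl R N (shf e).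
    rewrite natrB // natrD; apply: (addIr (e 0%N)%:R); rewrite [RHS]addrC -h1; ring.
  have [E1 E2] := IH _ _ _ (fun i hi => hc i.+1 hi) (fun i hi => he i.+1 hi) h2.
  have he0 := he 0%N isT.
  have k20 : k2 = 0%N by nia.
  split; first by rewrite hk2 k20.
  by move=> [|i] hi; [lia | apply: E2].
have k20 : k2 = 0%N by have := he 0%N isT; nia.
have h2 : (e 0%N - c 0%N)%:R + R * vl R N (shf e) = R * vl R N (shf c).
  rewrite k20 muln0 addn0 in le h1.
  rewrite natrB ?(ltnW le) //; apply: (addIr (c 0%N)%:R).
  rewrite add0r in h1. rewrite -[in RHS]addrC h1 ; ring.
have [E1 _] := IH _ _ _ (fun i hi => he i.+1 hi) (fun i hi => hc i.+1 hi) h2.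
rewrite k20 muln0 addn0 in le; lia.
Qed.

Lemma Umax n d N c e : (0 < n)%N -> (0 < d)%N -> coprime n d ->
  (forall i, (0 < i < N)%N -> (c i < d)%N) -> (forall i, (0 < i < N)%N -> (e i < d)%N) ->
  vl (n%:R / d%:R) N c = vl (n%:R / d%:R) N e -> forall i, (i < N)%N -> c i = e i.
Proof.
move=> hn hd co; case: N => [//|N] hc he; rewrite !vlS => h.
have hc' : forall i, (i < N)%N -> (shf c i < d)%N by move=> i hi; apply: hc.
have he' : forall i, (i < N)%N -> (shf e i < d)%N by move=> i hi; apply: he.
case: (leqP (e 0%N) (c 0%N)) => le.
  have h2 : (c 0%N - e 0%N)%:R + n%:R / d%:R * vl (n%:R / d%:R) N (shf c) =
            n%:R / d%:R * vl (n%:R / d%:R) N (shf e).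
    rewrite natrB //; apply: (addIr (e 0%N)%:R); rewrite [RHS]addrC -h; ring.
  have [E1 E2] := Core hn hd co hc' he' h2.
  by move=> [|i] hi; [lia | apply: E2].
have h2 : (e 0%N - c 0%N)%:R + n%:R / d%:R * vl (n%:R / d%:R) N (shf e) =
          n%:R / d%:R * vl (n%:R / d%:R) N (shf c).
  rewrite natrB ?(ltnW le) //; apply: (addIr (c 0%N)%:R); rewrite [RHS]addrC h; ring.
have [E1 E2] := Core hn hd co he' hc' h2.
lia.
Qed.

Lemma vl_ge0 r N c : 0 <= r -> 0 <= vl r N c.
Proof. by move=> h; apply: sumr_ge0 => i _; rewrite mulr_ge0 ?exprn_ge0. Qed.

Lemma vl_eq0 r N c : 0 < r -> vl r N c = 0 -> forall i, (i < N)%N -> c i = 0%N.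
Proof.
move=> hr h i hi.
have H : forall j : 'I_N, predT j -> 0 <= (c j)%:R * r ^+ j.
  by move=> j _; rewrite mulr_ge0 ?exprn_ge0 // ltW.
have := @psumr_eq0P _ _ predT (fun i : 'I_N => (c i)%:R * r ^+ i) H h (Ordinal hi) isT.
move=> /= /eqP; rewrite mulf_eq0 expf_eq0 (gt_eqF hr) andbF orbF pnatr_eq0.
by move=> /eqP.
Qed.

Lemma lnc_le_vl r N c : 1 <= r -> (lnc N c)%:R <= vl r N c.
Proof.
move=> h; rewrite /lnc natr_sum; apply: ler_sum => i _.
by rewrite -{1}(mulr1 (c i)%:R) ler_wpM2l // exprn_ege1.
Qed.

Lemma vl_pos r N c : 0 < r -> (0 < lnc N c)%N -> 0 < vl r N c.
Proof.
move=> hr hl; rewrite lt_def vl_ge0 ?ltW // andbT; apply/eqP => h.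
have := vl_eq0 hr h; move: hl; rewrite /lnc => + H.
by rewrite big1 // => i _; apply: H.
Qed.

Definition sb (c : nat -> nat) (i a : nat) : nat -> nat :=
  fun j => if j == i then (c j - a)%N else c j.

Lemma sb_spec c i a : (a <= c i)%N -> forall j, c j = (sb c i a j + dl a i j)%N.
Proof. by move=> h j; rewrite /sb /dl; case: eqP => [->|]; [rewrite subnK | rewrite addn0]. Qed.

Lemma zb_sb N c i a : zb N c -> zb N (sb c i a).
Proof. by move=> z j hj; rewrite /sb z //; case: eqP. Qed.

Lemma zb_add N c e : zb N c -> zb N e -> zb N (fun j => c j + e j)%N.
Proof. by move=> z1 z2 j hj; rewrite z1 ?z2. Qed.

Lemma zb_mono N M c : zb N c -> (N <= M)%N -> zb M c.
Proof. by move=> z h j hj; apply: z; apply: leq_trans hj. Qed.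

Lemma zb_dl' N a j : (j < N)%N -> zb N (dl a j).
Proof. by move=> h; apply: zb_mono h; apply: zb_dl. Qed.

Lemma MoveUp n d N c i : (0 < d)%N -> zb N c -> (i < N)%N -> (n <= c i)%N ->
  let c' := fun j => (sb c i n j + dl d i.+1 j)%N in
  [/\ zb N.+1 c', vl (n%:R / d%:R) N.+1 c' = vl (n%:R / d%:R) N c &
      (lnc N.+1 c' + n = lnc N c + d)%N].
Proof.
move=> hd z hi hc c'.
have E : forall j, (j < N.+1)%N -> c j = (sb c i n j + dl n i j)%N by move=> j _; apply: sb_spec.
have zN1 : zb N.+1 c by apply: zb_mono z _.
split.
- apply: zb_add; first by apply: zb_sb.
  by apply: zb_dl'.
- rewrite -(vl_widen _ z (leqnSn N)) (vl_ext _ E) !vl_add !vl_dl //; last by apply: ltnW.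
  by rewrite (key n i hd).
- rewrite -(lnc_widen z (leqnSn N)) (lnc_ext E) !lnc_add !lnc_dl //; last by apply: ltnW.
  lia.
Qed.

Lemma MoveDown n d N c i : (0 < d)%N -> zb N c -> (i.+1 < N)%N -> (d <= c i.+1)%N ->
  let c' := fun j => (sb c i.+1 d j + dl n i j)%N in
  [/\ zb N c', vl (n%:R / d%:R) N c' = vl (n%:R / d%:R) N c &
      (lnc N c' + d = lnc N c + n)%N].
Proof.
move=> hd z hi hc c'.
have E : forall j, (j < N)%N -> c j = (sb c i.+1 d j + dl d i.+1 j)%N by move=> j _; apply: sb_spec.
have hi' : (i < N)%N by apply: ltnW.
split.
- apply: zb_add; first by apply: zb_sb.
  by apply: zb_dl'.
- rewrite [RHS](vl_ext _ E) !vl_add !vl_dl //.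
  by rewrite (key n i hd).
- rewrite [lnc N c](lnc_ext E) !lnc_add !lnc_dl //.
  lia.
Qed.

Lemma MinL n d N0 c0 : (0 < d)%N -> coprime n d -> (d < n)%N ->
  (forall i, (c0 i < n)%N) -> zb N0 c0 ->
  forall L N c, (lnc N c <= L)%N -> zb N c ->
  vl (n%:R / d%:R) N c = vl (n%:R / d%:R) N0 c0 -> (lnc N0 c0 <= lnc N c)%N.
Proof.
move=> hd co hdn hc0 z0; elim=> [|L IH] N c hL z hv.
  1,2: case: (boolP [exists i : 'I_N, (n <= c i)%N]).
  - move=> /existsP [i hi].
    have [z' hv' hl'] := MoveUp hd z (ltn_ord i) hi; lia.
  - move=> /existsPn H.
    set B := maxn N N0.
    have hB : vl (n%:R / d%:R) B c = vl (n%:R / d%:R) B c0.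
      by rewrite (vl_widen _ z (leq_maxl _ _)) (vl_widen _ z0 (leq_maxr _ _)).
    have U := Umin hd co _ (fun i _ => hc0 i) hB.
    have : lnc B c = lnc B c0.
      apply: lnc_ext; apply: U => j hj.
      case: (ltnP j N) => hjN; first by have := H (Ordinal hjN); rewrite -ltnNge.
      by rewrite z //; apply: leq_ltn_trans (hc0 0%N).
    rewrite (lnc_widen z (leq_maxl _ _)) (lnc_widen z0 (leq_maxr _ _)) => ->; done.
  - move=> /existsP [i hi].
    have [z' hv' hl'] := MoveUp hd z (ltn_ord i) hi.
    have : (lnc N0 c0 <= lnc N.+1 (fun j => (sb c i n j + dl d i.+1 j)%N))%N.
      apply: IH => //; first by lia.
      by rewrite hv'.
    lia.
  - move=> /existsPn H.
    set B := maxn N N0.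
    have hB : vl (n%:R / d%:R) B c = vl (n%:R / d%:R) B c0.
      by rewrite (vl_widen _ z (leq_maxl _ _)) (vl_widen _ z0 (leq_maxr _ _)).
    have U := Umin hd co _ (fun i _ => hc0 i) hB.
    have : lnc B c = lnc B c0.
      apply: lnc_ext; apply: U => j hj.
      case: (ltnP j N) => hjN; first by have := H (Ordinal hjN); rewrite -ltnNge.
      by rewrite z //; apply: leq_ltn_trans (hc0 0%N).
    rewrite (lnc_widen z (leq_maxl _ _)) (lnc_widen z0 (leq_maxr _ _)) => ->; done.
Qed.

Lemma R_ge1 n d : (0 < d)%N -> (d <= n)%N -> 1 <= n%:R / d%:R :> rat.
Proof. by move=> hd h; rewrite ler_pdivlMr ?ltr0n // mul1r ler_nat. Qed.

Lemma MaxL n d N0 c0 K : (0 < d)%N -> coprime n d -> (d < n)%N ->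
  (forall i, (0 < i)%N -> (c0 i < d)%N) -> zb N0 c0 ->
  vl (n%:R / d%:R) N0 c0 <= K%:R ->
  forall L N c, (K <= lnc N c + L)%N -> zb N c ->
  vl (n%:R / d%:R) N c = vl (n%:R / d%:R) N0 c0 -> (lnc N c <= lnc N0 c0)%N.
Proof.
move=> hd co hdn hc0 z0 hK.
have hn : (0 < n)%N by apply: leq_trans hdn.
have R1 := R_ge1 hd (ltnW hdn).
have bnd : forall N c, vl (n%:R / d%:R) N c = vl (n%:R / d%:R) N0 c0 -> (lnc N c <= K)%N.
  move=> N c h; rewrite -(ler_nat rat); apply: le_trans hK; rewrite -h.
  exact: lnc_le_vl.
elim=> [|L IH] N c hL z hv;
  (case: (boolP [exists i : 'I_N, (0 < i)%N && (d <= c i)%N]);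
   [move=> /existsP [[j hj] /andP [/= hj0 hcj]]; case: j hj hj0 hcj => [//|i] hi _ hci;
    have [z' hv' hl'] := MoveDown n hd z hi hci | move=> /existsPn H]).
- have := bnd _ _ (etrans hv' hv); lia.
- set B := maxn N N0.
  have hB : vl (n%:R / d%:R) B c = vl (n%:R / d%:R) B c0.
    by rewrite (vl_widen _ z (leq_maxl _ _)) (vl_widen _ z0 (leq_maxr _ _)).
  have hc0' : forall i, (0 < i < B)%N -> (c0 i < d)%N by move=> i /andP [h _]; apply: hc0.
  have U := Umax hn hd co _ hc0' hB.
  have : lnc B c = lnc B c0.
    apply: lnc_ext; apply: U => j /andP [hj0 hj].
    case: (ltnP j N) => hjN; first by have := H (Ordinal hjN); rewrite /= hj0 /= -ltnNge.
    by rewrite z.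
  rewrite (lnc_widen z (leq_maxl _ _)) (lnc_widen z0 (leq_maxr _ _)) => ->; done.
- have : (lnc N (fun j => (sb c i.+1 d j + dl n i j)%N) <= lnc N0 c0)%N.
    apply: IH => //; first by lia.
    by rewrite hv'.
  lia.
- set B := maxn N N0.
  have hB : vl (n%:R / d%:R) B c = vl (n%:R / d%:R) B c0.
    by rewrite (vl_widen _ z (leq_maxl _ _)) (vl_widen _ z0 (leq_maxr _ _)).
  have hc0' : forall i, (0 < i < B)%N -> (c0 i < d)%N by move=> i /andP [h _]; apply: hc0.
  have U := Umax hn hd co _ hc0' hB.
  have : lnc B c = lnc B c0.
    apply: lnc_ext; apply: U => j /andP [hj0 hj].
    case: (ltnP j N) => hjN; first by have := H (Ordinal hjN); rewrite /= hj0 /= -ltnNge.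
    by rewrite z.
  rewrite (lnc_widen z (leq_maxl _ _)) (lnc_widen z0 (leq_maxr _ _)) => ->; done.
Qed.

Lemma Unb n d : (0 < d)%N -> (n < d)%N -> forall K N c i, zb N c -> (i < N)%N -> (n <= c i)%N ->
  exists N' c', [/\ zb N' c', vl (n%:R / d%:R) N' c' = vl (n%:R / d%:R) N c &
                   (lnc N c + K <= lnc N' c')%N].
Proof.
move=> hd hnd; elim=> [|K IH] N c i z hi hc.
  by exists N, c; split => //; rewrite addn0.
have [z' hv' hl'] := MoveUp hd z hi hc.
have hc' : (n <= sb c i n i.+1 + dl d i.+1 i.+1)%N.
  by rewrite /dl eqxx; apply: leq_trans (ltnW hnd) _; apply: leq_addl.
have [N2 [c2 [z2 hv2 hl2]]] := IH _ _ i.+1 z' hi hc'.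
exists N2, c2; split => //; first by rewrite hv2 hv'.
lia.
Qed.

Lemma inSr_vl r x : in_Sr r x -> exists N c, zb N c /\ x = vl r N c.
Proof.
move=> [s ->]; exists (size s), (fun i => nth 0%N s i); split => //.
by move=> i hi; rewrite nth_default.
Qed.

Lemma vl_inSr r N c : in_Sr r (vl r N c).
Proof.
exists (mkseq c N); rewrite /vl size_mkseq; apply: eq_bigr => i _.
by rewrite nth_mkseq.
Qed.

Lemma inSr_pow r i : in_Sr r (r ^+ i).
Proof. by have := vl_inSr r i.+1 (dl 1 i); rewrite vl_dl // mul1r. Qed.

Lemma atom_pow r a : 0 < r -> is_atom r a -> exists j, a = r ^+ j.
Proof.
move=> hr [ha [a0 hat]].
have [N [c [z ea]]] := inSr_vl ha.
have : exists i : 'I_N, (0 < c i)%N.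
  case: (boolP [exists i : 'I_N, (0 < c i)%N]) => [/existsP //|/existsPn H].
  exfalso; move/eqP: a0; apply.
  by rewrite ea vl_zero // => i hi; have := H (Ordinal hi); rewrite lt0n negbK => /eqP.
move=> [i hi]; exists i.
have E : forall j, (j < N)%N -> c j = (sb c i 1 j + dl 1 i j)%N by move=> j _; apply: sb_spec.
have ea' : a = vl r N (sb c i 1) + r ^+ i.
  by rewrite ea (vl_ext _ E) vl_add vl_dl // mul1r.
have [h|h] := hat (vl r N (sb c i 1)) (r ^+ i) (vl_inSr _ _ _) (inSr_pow r i) ea'.
- by rewrite ea' h add0r.
- by move: h => /eqP; rewrite expf_eq0 (gt_eqF hr) andbF.
Qed.

Lemma len_vl r x k : 0 < r -> is_length r x k ->
  exists N c, [/\ zb N c, vl r N c = x & lnc N c = k].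
Proof.
move=> hr [f [hf [<- <-]]]; elim: f hf => [|a f IH] hf.
  by exists 0%N, (fun _ => 0%N); split => //; rewrite ?vl0 ?lnc0 ?big_nil.
have [N [c [z hv hl]]] := IH (fun b hb => hf b (mem_behead (s := a :: f) hb)).
have [j ->] := atom_pow hr (hf a (mem_head _ _)).
set M := maxn N j.+1.
exists M, (fun i => c i + dl 1 j i)%N; split.
- by apply: zb_add; [apply: zb_mono z (leq_maxl _ _)| apply: zb_dl' ; apply: leq_maxr].
- rewrite vl_add vl_dl ?(leq_maxr N j.+1) // (vl_widen _ z (leq_maxl _ _)) hv big_cons mul1r.
  by rewrite addrC.
- rewrite lnc_add lnc_dl ?(leq_maxr N j.+1) // (lnc_widen z (leq_maxl _ _)) hl /=.
  by rewrite addnC.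
Qed.

Lemma len_add r x y a b : is_length r x a -> is_length r y b -> is_length r (x + y) (a + b).
Proof.
move=> [f [hf [hs hz]]] [g [hg [hs' hz']]]; exists (f ++ g); split.
- by move=> u; rewrite mem_cat => /orP [] ?; [apply: hf | apply: hg].
- by split; [rewrite big_cat hs hs' | rewrite size_cat hz hz'].
Qed.

Lemma len_pow r j k : is_atom r (r ^+ j) -> is_length r (k%:R * r ^+ j) k.
Proof.
move=> ha; elim: k => [|k IH].
  by exists [::]; split => //; rewrite big_nil mul0r.
rewrite -addn1 natrD mulrDl mul1r; apply: len_add => //.
exists [:: r ^+ j]; split => //; last by rewrite big_seq1.
by move=> u; rewrite mem_seq1 => /eqP ->.
Qed.

Lemma vl_len r N c : (forall j, is_atom r (r ^+ j)) -> is_length r (vl r N c) (lnc N c).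
Proof.
move=> ha; elim: N => [|N IH].
  by rewrite vl0 lnc0; exists [::]; split => //; rewrite big_nil.
by rewrite vlSr lncSr; apply: len_add => //; apply: len_pow.
Qed.

Lemma atom_crit r j : 0 < r -> (forall N c, vl r N c = r ^+ j -> (lnc N c <= 1)%N) ->
  is_atom r (r ^+ j).
Proof.
move=> hr H; split; first exact: inSr_pow.
split; first by rewrite expf_eq0 (gt_eqF hr) andbF.
move=> u v hu hv e.
have [N1 [c1 [z1 eu]]] := inSr_vl hu.
have [N2 [c2 [z2 ev]]] := inSr_vl hv.
rewrite eu ev in e *.
set B := maxn N1 N2.
have hB := H B (fun i => c1 i + c2 i)%N.
rewrite vl_add (vl_widen _ z1 (leq_maxl _ _)) (vl_widen _ z2 (leq_maxr _ _)) -e in hB.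
have := hB erefl; rewrite lnc_add (lnc_widen z1 (leq_maxl _ _)) (lnc_widen z2 (leq_maxr _ _)).
case E1: (lnc N1 c1) => [|a].
  by left; rewrite vl_zero // => i hi; move: E1; rewrite /lnc => /eqP; rewrite sum_nat_eq0 => /forallP /(_ (Ordinal hi)) /eqP.
case E2: (lnc N2 c2) => [|b]; last by rewrite addSn addnS.
by right; rewrite vl_zero // => i hi; move: E2; rewrite /lnc => /eqP; rewrite sum_nat_eq0 => /forallP /(_ (Ordinal hi)) /eqP.
Qed.

Lemma inSr0 r : in_Sr r 0.
Proof. by have := vl_inSr r 0 (fun _ => 0%N); rewrite vl0. Qed.

Lemma elast0 r : elast_set r (Some 1).
Proof. by exists 0; split; [apply: inSr0 | rewrite /elasticity eqxx]. Qed.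

Lemma FE1 r : (forall v, elast_set r v <-> v = Some 1) -> fully_elastic r.
Proof.
move=> H; split; first by move/H.
move=> _ q; split.
  move/H => [->]; split => // q' hq'; exists 1; split => //; exact: elast0.
move=> [hq1 hq]; apply/H.
case: (ltrgtP q 1) => h.
- by rewrite ltNge hq1 in h.
- have [s [/H [->] hs]] := hq 1 h.
  by rewrite ltxx in hs.
- by rewrite h.
Qed.

Lemma FE3 r : (forall v, elast_set r v <-> exists q, v = Some q /\ 1 <= q) -> fully_elastic r.
Proof.
move=> H; split; first by move/H => [q [] //].
move=> _ q; split.
  move=> hq; have [q0 [E h1]] := (H _).1 hq; case: E => E; subst q0.
  by split => // q' hq'; exists q; split.
by move=> [hq1 _]; apply/H; exists q.
Qed.

Lemma vl_nat k N c : vl (k%:R) N c = (\sum_(i < N) c i * k ^ i)%N%:R.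
Proof. by rewrite /vl natr_sum; apply: eq_bigr => i _; rewrite natrM natrX. Qed.

Lemma atom_nat k a : is_atom (k%:R) a -> a = 1.
Proof.
move=> [ha [a0 hat]].
have [N [c [z ea]]] := inSr_vl ha; rewrite vl_nat in ea; subst a.
set m := (\sum_(i < N) c i * k ^ i)%N in a0 hat *.
have hnat : forall j : nat, in_Sr (k%:R) j%:R.
  by move=> j; have := vl_inSr (k%:R) 1 (fun _ => j); rewrite vlS vl0 mulr0 addr0.
case: m a0 hat => [|[|m]] a0 hat; first by rewrite eqxx in a0.
  done.
have := hat 1 (m.+1)%:R (hnat 1%N) (hnat m.+1).
rewrite [m.+2%:R]mulrSr addrC => /(_ erefl) [] /eqP; rewrite ?oner_eq0 //. by rewrite pnatr_eq0.
Qed.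

Lemma len_nat k x l : is_length (k%:R) x l -> x = l%:R.
Proof.
move=> [f [hf [<- <-]]]; elim: f hf => [|a f IH] hf; first by rewrite big_nil.
rewrite big_cons (atom_nat (hf a (mem_head _ _))) IH /=.
  by rewrite -natr1 addrC.
by move=> b hb; apply: hf; rewrite in_cons hb orbT.
Qed.

Lemma part2 r : (exists k : nat, r = k%:R) ->
  (forall v, elast_set r v <-> v = Some 1) /\ fully_elastic r.
Proof.
move=> [k ->].
have H : forall v, elast_set (k%:R) v <-> v = Some 1.
  move=> v; split; last by move=> ->; apply: elast0.
  move=> [x [hx]]; rewrite /elasticity; case: eqP => // x0.
  case: v => [q|].
    move=> [m [M [hm [hM [_ ->]]]]].
    have e1 := len_nat hm; have e2 := len_nat hM.
    rewrite e1 in e2; move/eqP: e2; rewrite eqr_nat => /eqP <-.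
    rewrite divff //; apply/eqP => h; apply: x0; by rewrite e1 h.
  move=> H0; have [l0 [hl0 _]] := H0 0%N; have [l [hl hll]] := H0 l0.
  move: (len_nat hl); rewrite (len_nat hl0) => /eqP; rewrite eqr_nat => /eqP E.
  by rewrite E ltnn in hll.
by split => //; apply: FE1.
Qed.

Lemma lnc_eq0 r N c : lnc N c = 0%N -> vl r N c = 0.
Proof.
move=> E; rewrite vl_zero // => i hi; move: E; rewrite /lnc => /eqP.
by rewrite sum_nat_eq0 => /forallP /(_ (Ordinal hi)) /eqP.
Qed.

Lemma A1 n d : (0 < d)%N -> coprime n d -> (1 < n)%N -> (n < d)%N ->
  forall N c j, vl (n%:R / d%:R) N c = (n%:R / d%:R) ^+ j -> (lnc N c <= 1)%N.
Proof.
move=> hd co hn hnd; set R := n%:R / d%:R.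
have R0 : 0 < R by rewrite divr_gt0 // ltr0n //; apply: ltn_trans hn.
have R1 : R < 1 by rewrite ltr_pdivrMr ?ltr0n // mul1r ltr_nat.
elim=> [|N IH] c j; first by rewrite lnc0.
rewrite vlS lncS => h.
have Y0 := vl_ge0 N (shf c) (ltW R0).
case: j h => [|j] h.
  case E: (c 0%N) h => [|c0] h.
    rewrite add0r expr0 in h.
    have hd1 := @DivK n d N (fun _ => 0%N) (shf c) 1 hd co.
    have : (n %| 1)%N by apply: hd1; rewrite vl_zero // mulr0 addr0 h.
    by rewrite dvdn1 => /eqP hn1; rewrite hn1 in hn.
  have hc0 : c0 = 0%N.
    apply/eqP; rewrite -(eqr_nat rat); apply/eqP.
    have : c0.+1%:R <= 1 :> rat by rewrite expr0 in h; rewrite -[X in _ <= X]h lerDl mulr_ge0 // ltW.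
    by rewrite lern1 ltnS leqn0 => /eqP ->.
  subst c0.
  have : R * vl R N (shf c) = 0 by apply: (addrI (1%:R)); rewrite addr0; move: h; rewrite expr0.
  move=> /eqP; rewrite mulf_eq0 (gt_eqF R0) /= => /eqP /(vl_eq0 R0) H.
  by rewrite lnc_zero.
case E: (c 0%N) h => [|c0] h.
  rewrite add0r exprS in h; move/(mulfI (lt0r_neq0 R0)): h => h.
  by rewrite add0n; apply: IH h.
exfalso.
have : R ^+ j.+1 < 1 by rewrite exprn_ilt1 // ltW.
rewrite -h; apply/negP; rewrite -leNgt.
apply: le_trans (_ : c0.+1%:R <= _); first by rewrite ler1n.
by rewrite lerDl mulr_ge0 // ltW.
Qed.

Lemma len_pos r x m : x != 0 -> is_length r x m -> (0 < m)%N.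
Proof.
move=> x0 [f [_ [hs hz]]]; case: f hs hz => [|a f] hs <- //.
by move: x0; rewrite -hs big_nil eqxx.
Qed.

Lemma part1_nd n d : (0 < d)%N -> coprime n d -> (1 < n)%N -> (n < d)%N ->
  (forall v, elast_set (n%:R / d%:R) v <-> v = Some 1 \/ v = None) /\ ~ fully_elastic (n%:R / d%:R).
Proof.
move=> hd co hn hnd; set R := n%:R / d%:R.
have R0 : 0 < R by rewrite divr_gt0 // ltr0n //; apply: ltn_trans hn.
have hat : forall j, is_atom R (R ^+ j).
  by move=> j; apply: atom_crit => // N c; apply: A1.
have unb : forall x N c i K, zb N c -> vl R N c = x -> (i < N)%N -> (n <= c i)%N ->
    exists l, is_length R x l /\ (K < l)%N.
  move=> x N c i K z hv hi hc.
  have [N' [c' [z' hv' hl']]] := Unb hd hnd K.+1 z hi hc.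
  exists (lnc N' c'); split; last by lia.
  by rewrite -hv -hv'; apply: vl_len.
have H : forall v, elast_set R v <-> v = Some 1 \/ v = None.
  move=> v; split; last first.
    move=> [->|->]; first by apply: elast0.
    exists (vl R 1 (dl n 0)); split; first by apply: vl_inSr.
    rewrite /elasticity vl_dl // expr0 mulr1 pnatr_eq0.
    case: eqP => [n0|_]; first by rewrite n0 in hn.
    move=> K; apply: (unb _ 1%N (dl n 0) 0%N) => //. all: try apply: zb_dl. by rewrite vl_dl // expr0 mulr1. 
  move=> [x [hx]]; rewrite /elasticity; case: eqP => [_ ->|/eqP x0]; first by left.
  case: v => [q|]; last by right.
  move=> [m [M [hm [hM [hb ->]]]]]; left.
  have [N1 [c1 [z1 hv1 hl1]]] := len_vl R0 hm.
  have [N2 [c2 [z2 hv2 hl2]]] := len_vl R0 hM.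
  have small : forall N c, zb N c -> vl R N c = x -> forall i, (i < N)%N -> (c i < n)%N.
    move=> N c z hv i hi; rewrite ltnNge; apply/negP => hc.
    have [l [hl hMl]] := unb x N c i M z hv hi hc.
    by have := hb l hl; lia.
  set B := maxn N1 N2.
  have hB : vl R B c1 = vl R B c2.
    by rewrite (vl_widen _ z1 (leq_maxl _ _)) (vl_widen _ z2 (leq_maxr _ _)) hv1 hv2.
  have sm : forall N c, zb N c -> vl R N c = x -> forall i, (i < B)%N -> (c i < n)%N.
    move=> N c z hv i hi; case: (ltnP i N) => h; first by apply: (small N).
    by rewrite z //; apply: ltn_trans hn.
  have U := Umin hd co (sm _ _ z1 hv1) (sm _ _ z2 hv2) hB.
  have : lnc B c1 = lnc B c2 by apply: lnc_ext.
  rewrite (lnc_widen z1 (leq_maxl _ _)) (lnc_widen z2 (leq_maxr _ _)) hl1 hl2 => <-.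
  by rewrite divff // pnatr_eq0 -lt0n (len_pos x0 hm).
split => // FE.
have hN : elast_set R None by apply/H; right.
have := (FE.1 hN 2).2; rewrite ler1n => /(_ isT) /H [] //.
Qed.

Lemma n1_not_atomic n d : n = 1%N -> (1 < d)%N -> ~ atomic (n%:R / d%:R).
Proof.
move=> n1 hd at1; set R := (n%:R / d%:R : rat) in at1.
have hd0 : (0 < d)%N by apply: ltn_trans hd.
have R0 : 0 < R by rewrite divr_gt0 // ltr0n // n1.
have [l [f [hf [hs hz]]]] := at1 1 (eq_ind _ _ (inSr_pow R 0) _ (expr0 R)) (oner_neq0 _).
case: f hf hs hz => [|a f] hf hs hz; first by move: hs; rewrite big_nil => /eqP; rewrite eq_sym oner_eq0.
have [j ej] := atom_pow R0 (hf a (mem_head _ _)).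
have [_ [_ ha]] := hf a (mem_head _ _).
have K : R ^+ j = d%:R * R ^+ j.+1.
  rewrite /R -(key n j hd0). by rewrite {2}n1 mul1r.
have e : a = R ^+ j.+1 + (d.-1)%:R * R ^+ j.+1.
  rewrite ej K -[d in d%:R](ltn_predK hd) mulrSr mulrDl mul1r addrC //.
have hv : in_Sr R ((d.-1)%:R * R ^+ j.+1) by have := vl_inSr R j.+2 (dl d.-1 j.+1); rewrite vl_dl.
have [h|h] := ha _ _ (inSr_pow R j.+1) hv e.
  by move/eqP: h; rewrite expf_eq0 (gt_eqF R0) andbF.
move/eqP: h; rewrite mulf_eq0 expf_eq0 (gt_eqF R0) andbF orbF pnatr_eq0.
move=> /eqP; lia.
Qed.

Definition ind (p q : nat) : nat -> nat := fun i => if (p <= i < q)%N then 1%N else 0%N.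

Lemma ind_rec p t : forall i, ind p (p + t).+1 i = (ind p (p + t) i + dl 1 (p + t) i)%N.
Proof.
move=> i; rewrite /ind /dl.
case: ifP => h1; case: ifP => h2; case: eqP => h3 //; move: h1 h2 h3; lia.
Qed.

Lemma vl_ind r N p q : (p <= q <= N)%N -> vl r N (ind p q) = \sum_(p <= i < q) r ^+ i.
Proof.
move=> /andP [hpq hqN]; rewrite -(subnKC hpq) in hqN *.
elim: (q - p)%N hqN => [|t IH] h.
  rewrite addn0 big_geq // vl_zero // => i _; rewrite /ind.
  case: ifP => //; lia.
rewrite addnS in h *.
rewrite (vl_ext _ (fun i _ => ind_rec p t i)) vl_add vl_dl // mul1r IH; last by apply: ltnW.
by rewrite big_nat_recr //= leq_addr.
Qed.

Lemma lnc_ind N p q : (p <= q <= N)%N -> lnc N (ind p q) = (q - p)%N.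
Proof.
move=> /andP [hpq hqN]; rewrite -(subnKC hpq) in hqN *.
rewrite addKn; elim: (q - p)%N hqN => [|t IH] h.
  rewrite addn0 lnc_zero // => i _; rewrite /ind.
  case: ifP => //; lia.
rewrite addnS in h *.
rewrite (lnc_ext (fun i _ => ind_rec p t i)) lnc_add lnc_dl // IH; last by apply: ltnW.
by rewrite addn1.
Qed.

Lemma dRk d t : (0 < d)%N ->
  d%:R * (d.+1%:R / d%:R) ^+ t.+1 = d.+1%:R + \sum_(1 <= i < t.+1) (d.+1%:R / d%:R) ^+ i :> rat.
Proof.
move=> hd; elim: t => [|t IH].
  by rewrite big_geq // addr0 expr1 mulrC rd.
rewrite -(key d.+1 t.+1 hd) big_nat_recr //= addrA -IH.
by rewrite -[d.+1]addn1 natrD mulrDl mul1r.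
Qed.

Definition trc (N : nat) (c : nat -> nat) : nat -> nat := fun i => if (i < N)%N then c i else 0%N.
Lemma trc_zb N c : zb N (trc N c).
Proof. by move=> i hi; rewrite /trc ltnNge hi. Qed.
Lemma trc_eq N c : forall i, (i < N)%N -> c i = trc N c i.
Proof. by move=> i hi; rewrite /trc hi. Qed.

Lemma Kb (x : rat) : exists K : nat, x <= K%:R.
Proof.
case: (leP 0 x) => h; first by exists (Num.Def.archi_bound x); apply/ltW/archi_boundP.
by exists 0%N; apply: ltW.
Qed.

Lemma coprimeS d : coprime d.+1 d.
Proof. exact: coprimeSn. Qed.

Lemma atoms3 d : (1 < d)%N -> forall j, is_atom (d.+1%:R / d%:R) ((d.+1%:R / d%:R) ^+ j).
Proof.
move=> hd j; have hd0 : (0 < d)%N by apply: ltn_trans hd.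
apply: atom_crit; first by rewrite divr_gt0 // ltr0n.
move=> N c hv.
have [K hK] := Kb (vl (d.+1%:R / d%:R) j.+1 (dl 1 j)).
have hc0 : forall i, (0 < i)%N -> (dl 1 j i < d)%N by move=> i _; rewrite /dl; case: eqP.
have := @MaxL d.+1 d j.+1 (dl 1 j) K hd0 (coprimeS d) (ltnSn d) hc0 (@zb_dl 1 j) hK K N (trc N c).
rewrite -(lnc_ext (trc_eq c)) lnc_dl // => H; apply: H; first by apply: leq_addl.
  exact: trc_zb.
by rewrite -(vl_ext _ (trc_eq c)) hv vl_dl // mul1r.
Qed.

Lemma construct d a b : (1 < d)%N -> (0 < b)%N -> (b < a)%N ->
  exists x, in_Sr (d.+1%:R / d%:R) x /\ elasticity (d.+1%:R / d%:R) x (Some (a%:R / b%:R)).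
Proof.
move=> hd hb hab; set R := d.+1%:R / d%:R.
have hd0 : (0 < d)%N by apply: ltn_trans hd.
have R0 : 0 < R by rewrite divr_gt0 // ltr0n.
have co := coprimeS d.
set k := ((a - b) * d)%N; set s := ((b - 1) * d)%N; set N := (k + s).+1.
have hk : (0 < k)%N by rewrite muln_gt0 subn_gt0 hab.
have hkN : (k < N)%N by rewrite ltnS leq_addr.
set cs := fun i => (dl d k i + ind k.+1 N i)%N.
set ch := fun i => (dl d.+1 0 i + ind 1 k i + ind k.+1 N i)%N.
set S := \sum_(k.+1 <= i < N) R ^+ i.
have vcs : vl R N cs = d%:R * R ^+ k + S.
  by rewrite vl_add vl_dl // vl_ind // hkN leqnn.
have vch : vl R N ch = d.+1%:R + \sum_(1 <= i < k) R ^+ i + S.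
  rewrite vl_add vl_add vl_dl // expr0 mulr1 vl_ind ?hk ?(ltnW hkN) //.
  by rewrite vl_ind // hkN leqnn.
have veq : vl R N cs = vl R N ch.
  rewrite vcs vch; case: (k) hk => [//|k'] _; by rewrite dRk.
have lcs : lnc N cs = (d + s)%N.
  by rewrite lnc_add lnc_dl // lnc_ind ?hkN ?leqnn // /N subSS addKn.
have lch : lnc N ch = (d.+1 + (k - 1) + s)%N.
  rewrite lnc_add lnc_add lnc_dl // lnc_ind ?hk ?(ltnW hkN) //.
  by rewrite lnc_ind ?hkN ?leqnn // /N subSS addKn.
have zcs : zb N cs by move=> i hi; rewrite /cs /dl /ind; case: eqP => h1; case: ifP => h2; lia.
have zch : zb N ch by move=> i hi; rewrite /ch /dl /ind; case: eqP => h1; case: ifP => h2; case: ifP => h3; lia.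
have hcs : forall i, (cs i < d.+1)%N by move=> i; rewrite /cs /dl /ind; case: eqP => h1; case: ifP => h2; lia.
have hch : forall i, (0 < i)%N -> (ch i < d)%N.
  by move=> i hi; rewrite /ch /dl /ind; case: eqP => h1; case: ifP => h2; case: ifP => h3; lia.
have ats := atoms3 hd.
exists (vl R N cs); split; first by apply: vl_inSr.
rewrite /elasticity.
case: eqP => [h0|_].
  have : 0 < vl R N cs by apply: vl_pos => //; rewrite lcs; lia.
  by rewrite h0 ltxx.
exists (d + s)%N, (d.+1 + (k - 1) + s)%N; split; first by rewrite -lcs; apply: vl_len.
split; first by rewrite veq -lch; apply: vl_len.
split.
  move=> l hl; have [N' [c' [z' hv' hl']]] := len_vl R0 hl; subst l.
  have h1 := @MinL d.+1 d N cs hd0 co (ltnSn d) hcs zcs (lnc N' c') N' c' (leqnn _) z' hv'.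
  have [K hK] := Kb (vl R N ch).
  have h2 := @MaxL d.+1 d N ch K hd0 co (ltnSn d) hch zch hK K N' c' (leq_addl _ _) z'.
  rewrite lcs lch in h1 h2; apply/andP; split => //; apply: h2.
  by rewrite hv' veq.
have e1 : (d + s)%N = (b * d)%N by rewrite /s; nia.
have e2 : (d.+1 + (k - 1) + s)%N = (a * d)%N by rewrite /s /k; nia.
rewrite e1 e2 !natrM -mulf_div divff ?mulr1 // pnatr_eq0 -lt0n //.
Qed.

Lemma part3_nd d : (1 < d)%N ->
  (forall v, elast_set (d.+1%:R / d%:R) v <-> exists q, v = Some q /\ 1 <= q) /\
  fully_elastic (d.+1%:R / d%:R).
Proof.
move=> hd; set R := d.+1%:R / d%:R.
have hd0 : (0 < d)%N by apply: ltn_trans hd.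
have R0 : 0 < R by rewrite divr_gt0 // ltr0n.
have R1 : 1 <= R by apply: R_ge1.
have H : forall v, elast_set R v <-> exists q, v = Some q /\ 1 <= q.
  move=> v; split.
    move=> [x [hx]]; rewrite /elasticity; case: eqP => [_ ->|/eqP x0]; first by exists 1.
    case: v => [q|].
      move=> [m [M [hm [hM [hb ->]]]]]; exists (M%:R / m%:R); split => //.
      have hm0 := len_pos x0 hm.
      rewrite ler_pdivlMr ?ltr0n // mul1r ler_nat.
      by have /andP [] := hb m hm.
    have [K hK] := Kb x.
    move=> /(_ K) [l [hl hKl]].
    have [N [c [z hv hl']]] := len_vl R0 hl.
    have := lnc_le_vl N c R1; rewrite hv hl' => h.
    have : (l%:R : rat) <= K%:R by apply: le_trans hK.
    by rewrite ler_nat leqNgt hKl.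
  move=> [q [-> hq]].
  case: (ltrgtP q 1) => h.
  - by rewrite ltNge hq in h.
  - rewrite -(divq_num_den q) in h *.
    have hq0 : 0 <= numq q by rewrite numq_ge0; apply: le_trans hq.
    have hden := denq_gt0 q.
    rewrite -(gez0_abs hq0) -(gtz0_abs hden) in h *.
    have E : forall m : nat, (m%:Z)%:~R = m%:R :> rat by [].
    rewrite !E in h *.
    apply: construct => //.
      by rewrite absz_gt0 gt_eqF.
    move: h; rewrite ltr_pdivlMr; last by rewrite ltr0n absz_gt0 gt_eqF.
    by rewrite mul1r ltr_nat.
  - by rewrite h; apply: elast0.
by split => //; apply: FE3.
Qed.

Unset Implicit Arguments.

Theorem proposition4p4 (r : rat) (hr : 0 < r) (hat : atomic r) :
  (r < 1 ->
     (forall v, elast_set r v <-> v = Some 1 \/ v = None) /\ ~ fully_elastic r) /\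
  ((exists n : nat, r = n%:R) ->
     (forall v, elast_set r v <-> v = Some 1) /\ fully_elastic r) /\
  (~ (exists n : nat, r = n%:R) -> numq r = denq r + 1 ->
     (forall v, elast_set r v <-> exists q, v = Some q /\ 1 <= q) /\
     fully_elastic r).
Proof.
have [n [d [er [co [hd [en ed]]]]]] : exists n d : nat, [/\ r = n%:R / d%:R, coprime n d, (0 < d)%N,
    numq r = n & denq r = d].
  exists `|numq r|%N, `|denq r|%N.
  have hq0 : 0 <= numq r by rewrite numq_ge0 ltW.
  have hden := denq_gt0 r.
  split.
  - rewrite -[LHS](divq_num_den r) -[in LHS](gez0_abs hq0) -[in LHS](gtz0_abs hden) //.
  - exact: coprime_num_den.
  - by rewrite absz_gt0 gt_eqF.
  - by rewrite gez0_abs.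
  - by rewrite gtz0_abs.
have hn : (0 < n)%N.
  by rewrite lt0n; apply/eqP => n0; move: hr; rewrite er n0 mul0r ltxx.
split; [|split].
- move=> r1.
  have hnd : (n < d)%N by move: r1; rewrite er ltr_pdivrMr ?ltr0n // mul1r ltr_nat.
  have hn1 : (1 < n)%N.
    case: n hn er co en hnd => [//|[|n]] _ er co en hnd //.
    by exfalso; apply: (@n1_not_atomic 1 d erefl hnd); rewrite -er.
  by rewrite er; apply: part1_nd.
- exact: part2.
- move=> nint e.
  have e' : n = d.+1 by apply/eqP; rewrite -eqz_nat -en -addn1 e ed.
  have hd1 : (1 < d)%N.
    case: d hd er co en ed e e' => [//|[|d]] _ er co en ed e e' //.
    by exfalso; apply: nint; exists n; rewrite er divr1.
  by rewrite er e'; apply: part3_nd.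
Qed.
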